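(* Let $\mathbb{K}$ be a class of frames definable in $\mathbf{K}$. Then $\mathbb{K}$ is definable in $\mathbf{K}\mathsf{biG}$ and $\mathbf{K}\mathsf{G}^2$.
   Context: A set of formulas $\Sigma$ defines a class of frames $\mathbb{K}$ in a logic $\mathbf{L}$ iff $\mathfrak{F}\in\mathbb{K}$ exactly when $\mathfrak{F}\models_\mathbf{L}\Sigma$. $\mathbf{K}$ is classical modal logic. $\mathbf{K}\mathsf{biG}$ is modal bi-Gödel logic on crisp frames: language over $\wedge,\vee,\rightarrow,\ominus$ (Gödel coimplication, $b\ominus_\mathsf{G}a=0$ if $b\le a$, else $b$), $\Box,\lozenge$, a single valuation into $[0,1]$ with Gödel operations ($\min$, $\max$, $a\rightarrow_\mathsf{G}b=1$ if $a\le b$ else $b$), $\Box$ as infimum and $\lozenge$ as supremum over $R$-successors, validity meaning value $1$ everywhere. $\mathbf{K}\mathsf{G}^2$ is its extension by a De Morgan negation $\neg$, interpreted on crisp frames with two valuations $v_1,v_2$ (support of truth/falsity) swapped by $\neg$, validity meaning $v_1=1$ and $v_2=0$ everywhere. $\mathbf{K}$ faithfully embeds into $\mathfrak{GK}^c$ (crisp modal Gödel logic) via $p\mapsto{\sim\sim}p$, where ${\sim}\phi:=\phi\rightarrow\mathbf{0}$; and $\mathbf{K}\mathsf{biG}$, $\mathbf{K}\mathsf{G}^2$ are conservative over $\mathfrak{GK}^c$ on crisp frames. *)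

(* Defs.v *)
From HB Require Import structures.
From mathcomp Require Import all_boot all_order all_algebra.
From mathcomp Require Import boolp classical_sets reals.
From mathcomp Require Import Rstruct.
From Stdlib Require Import Rdefinitions.

Set Implicit Arguments.
Unset Strict Implicit.
Unset Printing Implicit Defensive.
Import Order.TTheory GRing.Theory Num.Theory.
Local Open Scope classical_set_scope.
Local Open Scope ring_scope.

Record frame := Frame { world : Type ; rel : world -> world -> Prop }.

Definition frame_class := frame -> Prop.

Inductive fmK : Type :=
| KVar : nat -> fmK
| KBot : fmK
| KAnd : fmK -> fmK -> fmK
| KOr  : fmK -> fmK -> fmK
| KImp : fmK -> fmK -> fmK
| KBox : fmK -> fmK
| KDia : fmK -> fmK.

Fixpoint satK (F : frame) (V : nat -> world F -> Prop) (w : world F) (f : fmK)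
  : Prop :=
  match f with
  | KVar p => V p w
  | KBot => False
  | KAnd a b => satK V w a /\ satK V w b
  | KOr a b => satK V w a \/ satK V w b
  | KImp a b => satK V w a -> satK V w b
  | KBox a => forall u, rel w u -> satK V u a
  | KDia a => exists u, rel w u /\ satK V u a
  end.

Definition validK (F : frame) (Sigma : fmK -> Prop) : Prop :=
  forall f, Sigma f -> forall (V : nat -> world F -> Prop) (w : world F), satK V w f.

Definition definable_K (C : frame_class) : Prop :=
  exists Sigma : fmK -> Prop, forall F, C F <-> validK F Sigma.

Definition gmin (a b : R) : R := if a <= b then a else b.
Definition gmax (a b : R) : R := if a <= b then b else a.
Definition gimp (a b : R) : R := if a <= b then 1 else b.
Definition gcoimp (b a : R) : R := if b <= a then 0 else b.

(* infimum / supremum of the values at the R-successors of w;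
   the empty infimum is 1 and the empty supremum is 0 (values lie in [0,1]). *)
Definition box_inf (F : frame) (e : world F -> R) (w : world F) : R :=
  inf [set r : R | r = 1 \/ exists u, rel w u /\ r = e u].
Definition dia_sup (F : frame) (e : world F -> R) (w : world F) : R :=
  sup [set r : R | r = 0 \/ exists u, rel w u /\ r = e u].

Inductive fmG : Type :=
| GVar : nat -> fmG
| GBot : fmG
| GAnd : fmG -> fmG -> fmG
| GOr  : fmG -> fmG -> fmG
| GImp : fmG -> fmG -> fmG
| GCoimp : fmG -> fmG -> fmG
| GBox : fmG -> fmG
| GDia : fmG -> fmG
| GNeg : fmG -> fmG.              (* De Morgan negation (KG2 only) *)

Fixpoint biG_formula (f : fmG) : Prop :=
  match f with
  | GVar _ | GBot => True
  | GAnd a b | GOr a b | GImp a b | GCoimp a b => biG_formula a /\ biG_formula b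
  | GBox a | GDia a => biG_formula a
  | GNeg _ => False
  end.

Fixpoint evalBiG (F : frame) (v : nat -> world F -> R) (f : fmG) (w : world F)
  : R :=
  match f with
  | GVar p => v p w
  | GBot => 0
  | GAnd a b => gmin (evalBiG v a w) (evalBiG v b w)
  | GOr a b => gmax (evalBiG v a w) (evalBiG v b w)
  | GImp a b => gimp (evalBiG v a w) (evalBiG v b w)
  | GCoimp a b => gcoimp (evalBiG v a w) (evalBiG v b w)
  | GBox a => box_inf (fun u => evalBiG v a u) w
  | GDia a => dia_sup (fun u => evalBiG v a u) w
  | GNeg a => 0 (* not part of the KbiG language; never used *)
  end.

Definition unit_valuation (F : frame) (v : nat -> world F -> R) : Prop :=
  forall p w, 0 <= v p w <= 1.

Definition validBiG (F : frame) (Sigma : fmG -> Prop) : Prop :=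
  forall f, Sigma f -> forall (v : nat -> world F -> R),
    unit_valuation v -> forall w : world F, evalBiG v f w = 1.

Definition definable_KbiG (C : frame_class) : Prop :=
  exists Sigma : fmG -> Prop, (forall f, Sigma f -> biG_formula f) /\
    forall F, C F <-> validBiG F Sigma.

(* KG2 semantics: v1 (support of truth), v2 (support of falsity) *)
Fixpoint evalG2 (F : frame) (v1 v2 : nat -> world F -> R) (f : fmG)
  (w : world F) : R * R :=
  match f with
  | GVar p => (v1 p w, v2 p w)
  | GBot => (0, 1)
  | GAnd a b =>
      let: (x1, x2) := evalG2 v1 v2 a w in let: (y1, y2) := evalG2 v1 v2 b w in
      (gmin x1 y1, gmax x2 y2)
  | GOr a b =>
      let: (x1, x2) := evalG2 v1 v2 a w in let: (y1, y2) := evalG2 v1 v2 b w in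
      (gmax x1 y1, gmin x2 y2)
  | GImp a b =>
      let: (x1, x2) := evalG2 v1 v2 a w in let: (y1, y2) := evalG2 v1 v2 b w in
      (gimp x1 y1, gcoimp y2 x2)
  | GCoimp a b =>
      let: (x1, x2) := evalG2 v1 v2 a w in let: (y1, y2) := evalG2 v1 v2 b w in
      (gcoimp x1 y1, gimp y2 x2)
  | GBox a =>
      (box_inf (fun u => (evalG2 v1 v2 a u).1) w,
       dia_sup (fun u => (evalG2 v1 v2 a u).2) w)
  | GDia a =>
      (dia_sup (fun u => (evalG2 v1 v2 a u).1) w,
       box_inf (fun u => (evalG2 v1 v2 a u).2) w)
  | GNeg a => let: (x1, x2) := evalG2 v1 v2 a w in (x2, x1)
  end.

Definition validG2 (F : frame) (Sigma : fmG -> Prop) : Prop :=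
  forall f, Sigma f -> forall (v1 v2 : nat -> world F -> R),
    unit_valuation v1 -> unit_valuation v2 ->
    forall w : world F, evalG2 v1 v2 f w = (1, 0).

Definition definable_KG2 (C : frame_class) : Prop :=
  exists Sigma : fmG -> Prop, forall F, C F <-> validG2 F Sigma.

(* Main.v *)
Require Import Defs.
From HB Require Import structures.
From mathcomp Require Import all_boot all_order all_algebra.
From mathcomp Require Import boolp classical_sets reals.
From mathcomp Require Import Rstruct.
From Stdlib Require Import Rdefinitions.
Import Order.TTheory GRing.Theory Num.Theory.
Local Open Scope classical_set_scope.
Local Open Scope ring_scope.

Section Aux.
Variables (T : Type) (P : T -> Prop) (e : T -> R).

Lemma inf_all1 : (forall u, P u -> e u = 1) ->
  inf [set r : R | r = 1 \/ exists u, P u /\ r = e u] = 1.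
Proof.
move=> H; rewrite (_ : [set r : R | _] = [set 1]) ?inf1 //.
apply/seteqP; split => x /=; last by move->; left.
by case=> // -[u [Pu ->]]; apply: H.
Qed.

Lemma inf_some0 : (forall u, P u -> e u = 0 \/ e u = 1) ->
  (exists u, P u /\ e u = 0) ->
  inf [set r : R | r = 1 \/ exists u, P u /\ r = e u] = 0.
Proof.
move=> H [u0 [Pu0 e0]].
have lb : lbound [set r : R | r = 1 \/ exists u, P u /\ r = e u] 0.
  move=> x /= [->|[u [Pu ->]]]; first exact: ler01.
  by case: (H u Pu) => ->; rewrite ?lexx ?ler01.
apply/le_anti/andP; split.
  apply: (ge_inf (E := [set r : R | r = 1 \/ exists u, P u /\ r = e u])).
    by exists 0.
  by right; exists u0.
apply: lb_le_inf => //; by exists 1; left.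
Qed.

Lemma sup_all0 : (forall u, P u -> e u = 0) ->
  sup [set r : R | r = 0 \/ exists u, P u /\ r = e u] = 0.
Proof.
move=> H; rewrite (_ : [set r : R | _] = [set 0]) ?sup1 //.
apply/seteqP; split => x /=; last by move->; left.
by case=> // -[u [Pu ->]]; apply: H.
Qed.

Lemma sup_some1 : (forall u, P u -> e u = 0 \/ e u = 1) ->
  (exists u, P u /\ e u = 1) ->
  sup [set r : R | r = 0 \/ exists u, P u /\ r = e u] = 1.
Proof.
move=> H [u0 [Pu0 e0]].
have ub : ubound [set r : R | r = 0 \/ exists u, P u /\ r = e u] 1.
  move=> x /= [->|[u [Pu ->]]]; first exact: ler01.
  by case: (H u Pu) => ->; rewrite ?lexx ?ler01.
apply/le_anti/andP; split.
  by apply: ge_sup => //; exists 0; left.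
apply: (ub_le_sup (E := [set r : R | r = 0 \/ exists u, P u /\ r = e u])).
  by exists 1.
by right; exists u0.
Qed.
End Aux.

Lemma IZR0E : Rdefinitions.IZR BinNums.Z0 = (GRing.zero : R). Proof. by []. Qed.
Lemma IZR1E : Rdefinitions.IZR (BinNums.Zpos 1%positive) = (GRing.one _ : R). Proof. by []. Qed.

Fixpoint tr (f : fmK) : fmG :=
  match f with
  | KVar p => GImp (GImp (GVar p) GBot) GBot
  | KBot => GBot
  | KAnd a b => GAnd (tr a) (tr b)
  | KOr a b => GOr (tr a) (tr b)
  | KImp a b => GImp (tr a) (tr b)
  | KBox a => GBox (tr a)
  | KDia a => GDia (tr a)
  end.

Lemma tr_biG f : biG_formula (tr f).
Proof. by elim: f => //= *; split. Qed.

Definition crisp (S : Prop) (x : R) := (S /\ x = 1) \/ (~ S /\ x = 0).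

Lemma crisp01 S x : crisp S x -> x = 0 \/ x = 1.
Proof. by case=> -[_ ->]; [right|left]. Qed.

Ltac gsimp := rewrite /gmin /gmax /gimp /gcoimp ?lexx ?ler01 ?ler10 /=.

Lemma ler10' : (1 <= 0 :> R) = false.
Proof. by rewrite leNgt ltr01. Qed.

Lemma sat_ext (F : frame) (V V' : nat -> world F -> Prop) :
  (forall p w, V p w <-> V' p w) -> forall f w, satK V w f <-> satK V' w f.
Proof.
move=> H; elim=> //=.
- move=> a IHa b IHb w; by rewrite (propext (IHa w)) (propext (IHb w)).
- move=> a IHa b IHb w; by rewrite (propext (IHa w)) (propext (IHb w)).
- move=> a IHa b IHb w; by rewrite (propext (IHa w)) (propext (IHb w)).
- move=> a IHa w; split=> H1 u Hu; apply/IHa; exact: H1.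
- move=> a IHa w; split=> -[u [Hu H1]]; exists u; split=> //; exact/IHa.
Qed.

Lemma crisp_tr_biG (F : frame) (v : nat -> world F -> R) f w :
  crisp (satK (fun p w => 0 < v p w) w f) (evalBiG v (tr f) w).
Proof.
elim: f w => /=.
- move=> p w; rewrite ?IZR0E /gimp; case: (lerP (v p w) 0) => H.
    by right; split; [|rewrite ler10'].
  by left; split; [|rewrite lexx].
- by move=> w; right; split.
- move=> a IHa b IHb w; case: (IHa w) => -[Ha ->]; case: (IHb w) => -[Hb ->];
  rewrite /gmin ?lexx ?ler01 ?ler10'; [left|right|right|right]; tauto.
- move=> a IHa b IHb w; case: (IHa w) => -[Ha ->]; case: (IHb w) => -[Hb ->];
  rewrite /gmax ?lexx ?ler01 ?ler10'; [left|left|left|right]; tauto.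
- move=> a IHa b IHb w; case: (IHa w) => -[Ha ->]; case: (IHb w) => -[Hb ->];
  rewrite /gimp ?lexx ?ler01 ?ler10'; [left|right|left|left]; tauto.
- move=> a IHa w; rewrite /box_inf.
  have H01 : forall u, Defs.rel w u -> evalBiG v (tr a) u = 0 \/ evalBiG v (tr a) u = 1.
    by move=> u _; apply: crisp01; apply: IHa.
  case: (pselect (forall u, Defs.rel w u -> satK (fun p w => 0 < v p w) u a)) => Hs.
    left; split=> //; apply: inf_all1 => u Hu.
    by case: (IHa u) => -[] //; move/(_ _ Hu): Hs.
  right; split=> //; apply: inf_some0 => //.
  move/existsNP: Hs => [u]; move/not_implyP => [Hu Hn]; exists u; split=> //.
  by case: (IHa u) => -[].
- move=> a IHa w; rewrite /dia_sup.
  have H01 : forall u, Defs.rel w u -> evalBiG v (tr a) u = 0 \/ evalBiG v (tr a) u = 1.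
    by move=> u _; apply: crisp01; apply: IHa.
  case: (pselect (exists u, Defs.rel w u /\ satK (fun p w => 0 < v p w) u a)) => Hs.
    left; split=> //; apply: sup_some1 => //.
    case: Hs => u [Hu Hs]; exists u; split=> //; by case: (IHa u) => -[].
  right; split=> //; apply: sup_all0 => u Hu.
  by case: (IHa u) => -[] // Hs' _; exfalso; apply: Hs; exists u.
Qed.

Definition crisp2 (S : Prop) (x : R) := (S /\ x = 0) \/ (~ S /\ x = 1).

Lemma crisp2_01 S x : crisp2 S x -> x = 0 \/ x = 1.
Proof. by case=> -[_ ->]; [left|right]. Qed.

Ltac fin := rewrite /crisp /crisp2 /gmin /gmax /gimp /gcoimp ?lexx ?ler01 ?ler10' /=;
  split; (first [left; split; [tauto|done] | right; split; [tauto|done]]).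

Lemma crisp_tr_G2 (F : frame) (v1 v2 : nat -> world F -> R) f w :
  crisp (satK (fun p w => 0 < v1 p w) w f) (evalG2 v1 v2 (tr f) w).1 /\
  crisp2 (satK (fun p w => ~ (1 <= v2 p w)) w f) (evalG2 v1 v2 (tr f) w).2.
Proof.
elim: f w.
- move=> p w /=; rewrite ?IZR0E ?IZR1E /gimp /gcoimp.
  split.
    case: (lerP (v1 p w) 0) => H.
      by right; split; [|rewrite ler10'].
    by left; split; [|rewrite lexx].
  case: (lerP 1 (v2 p w)) => H.
    by right; split; [|rewrite ler10'].
  by left; split; [|rewrite lexx].
- move=> w /=; rewrite ?IZR0E ?IZR1E; split; right; split => //.
- move=> a IHa b IHb w /=; move: (IHa w) (IHb w).
  case: (evalG2 v1 v2 (tr a) w) => x1 x2; case: (evalG2 v1 v2 (tr b) w) => y1 y2 /=.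
  by move=> [[[? ->]|[? ->]] [[? ->]|[? ->]]] [[[? ->]|[? ->]] [[? ->]|[? ->]]]; fin.
- move=> a IHa b IHb w /=; move: (IHa w) (IHb w).
  case: (evalG2 v1 v2 (tr a) w) => x1 x2; case: (evalG2 v1 v2 (tr b) w) => y1 y2 /=.
  by move=> [[[? ->]|[? ->]] [[? ->]|[? ->]]] [[[? ->]|[? ->]] [[? ->]|[? ->]]]; fin.
- move=> a IHa b IHb w /=; move: (IHa w) (IHb w).
  case: (evalG2 v1 v2 (tr a) w) => x1 x2; case: (evalG2 v1 v2 (tr b) w) => y1 y2 /=.
  by move=> [[[? ->]|[? ->]] [[? ->]|[? ->]]] [[[? ->]|[? ->]] [[? ->]|[? ->]]]; fin.
- move=> a IHa w /=; rewrite /box_inf /dia_sup.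
  have H1 : forall u, Defs.rel w u -> (evalG2 v1 v2 (tr a) u).1 = 0 \/ (evalG2 v1 v2 (tr a) u).1 = 1.
    by move=> u _; apply: crisp01; apply: (IHa u).1.
  have H2 : forall u, Defs.rel w u -> (evalG2 v1 v2 (tr a) u).2 = 0 \/ (evalG2 v1 v2 (tr a) u).2 = 1.
    by move=> u _; apply: crisp2_01; apply: (IHa u).2.
  split.
    case: (pselect (forall u, Defs.rel w u -> satK (fun p w => 0 < v1 p w) u a)) => Hs.
      left; split=> //; apply: inf_all1 => u Hu.
      by case: (IHa u).1 => -[] //; move/(_ _ Hu): Hs.
    right; split=> //; apply: inf_some0 => //.
    move/existsNP: Hs => [u]; move/not_implyP => [Hu Hn]; exists u; split=> //.
    by case: (IHa u).1 => -[].
  case: (pselect (forall u, Defs.rel w u -> satK (fun p w => ~ (1 <= v2 p w)) u a)) => Hs.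
    left; split=> //; apply: sup_all0 => u Hu.
    by case: (IHa u).2 => -[] //; move/(_ _ Hu): Hs.
  right; split=> //; apply: sup_some1 => //.
  move/existsNP: Hs => [u]; move/not_implyP => [Hu Hn]; exists u; split=> //.
  by case: (IHa u).2 => -[].
- move=> a IHa w /=; rewrite /box_inf /dia_sup.
  have H1 : forall u, Defs.rel w u -> (evalG2 v1 v2 (tr a) u).1 = 0 \/ (evalG2 v1 v2 (tr a) u).1 = 1.
    by move=> u _; apply: crisp01; apply: (IHa u).1.
  have H2 : forall u, Defs.rel w u -> (evalG2 v1 v2 (tr a) u).2 = 0 \/ (evalG2 v1 v2 (tr a) u).2 = 1.
    by move=> u _; apply: crisp2_01; apply: (IHa u).2.
  split.
    case: (pselect (exists u, Defs.rel w u /\ satK (fun p w => 0 < v1 p w) u a)) => Hs.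
      left; split=> //; apply: sup_some1 => //.
      case: Hs => u [Hu Hs]; exists u; split=> //; by case: (IHa u).1 => -[].
    right; split=> //; apply: sup_all0 => u Hu.
    by case: (IHa u).1 => -[] // Hs' _; exfalso; apply: Hs; exists u.
  case: (pselect (exists u, Defs.rel w u /\ satK (fun p w => ~ (1 <= v2 p w)) u a)) => Hs.
    left; split=> //; apply: inf_some0 => //.
    case: Hs => u [Hu Hs]; exists u; split=> //; by case: (IHa u).2 => -[].
  right; split=> //; apply: inf_all1 => u Hu.
  by case: (IHa u).2 => -[] // Hs' _; exfalso; apply: Hs; exists u.
Qed.

Arguments crisp_tr_biG {F}.
Arguments crisp_tr_G2 {F}.
Arguments sat_ext {F V V'}.

Theorem theorem1 (C : frame_class) :
  definable_K C -> definable_KbiG C /\ definable_KG2 C.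
Proof.
case=> Sigma HS.
pose S' := fun f => exists g, Sigma g /\ f = tr g.
have ind : forall (F : frame) (V : nat -> world F -> Prop),
    exists v : nat -> world F -> R, unit_valuation v /\
      forall p w, (0 < v p w) <-> V p w.
  move=> F V; exists (fun p w => if pselect (V p w) then 1 else 0); split.
    by move=> p u /=; case: (pselect (V p u)) => h /=; rewrite ?lexx ?ler01.
  by move=> p u /=; case: (pselect (V p u)) => h /=; split => //; rewrite ?ltr01 ?ltxx.
have keyB : forall F, validK F Sigma <-> validBiG F S'.
  move=> F; split.
  - move=> H f [g [Sg ->]] v _ w.
    case: (crisp_tr_biG v g w) => -[Hs ->] //.
    by exfalso; apply: Hs; apply: H.
  - move=> H g Sg V w.
    have [v [uv Hv]] := ind F V.
    have := H _ (ex_intro _ g (conj Sg erefl)) v uv w.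
    case: (crisp_tr_biG v g w) => -[Hs ->]; last by move/eqP; rewrite eq_sym oner_eq0.
    by move=> _; exact: (proj1 (sat_ext Hv g w) Hs).
have keyG : forall F, validK F Sigma <-> validG2 F S'.
  move=> F; split.
  - move=> H f [g [Sg ->]] v1 v2 _ _ w.
    have [h1 h2] := crisp_tr_G2 v1 v2 g w.
    apply: injective_projections => /=; rewrite ?IZR0E ?IZR1E.
      case: h1 => -[Hs ->] //.
      by exfalso; apply: Hs; apply: H.
    case: h2 => -[Hs ->] //.
    by exfalso; apply: Hs; apply: H.
  - move=> H g Sg V w.
    have [v [uv Hv]] := ind F V.
    have uv0 : unit_valuation (fun (_ : nat) (_ : world F) => 0 : R).
      by move=> p u; rewrite lexx ler01.
    have := H _ (ex_intro _ g (conj Sg erefl)) v _ uv uv0 w.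
    move/(congr1 fst) => /=; rewrite ?IZR1E.
    case: (crisp_tr_G2 v (fun _ _ => 0) g w).1 => -[Hs ->]; last by move/eqP; rewrite eq_sym oner_eq0.
    by move=> _; exact: (proj1 (sat_ext Hv g w) Hs).
split.
  exists S'; split; first by move=> f [g [_ ->]]; apply: tr_biG.
  by move=> F; rewrite HS keyB.
by exists S' => F; rewrite HS keyG.
Qed.
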